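(* Let $p$ be a prime, $n \in \mathbb{N}$, and let $v \in \mathbb{Z}_p^n$ with $|v| \ge 2^{18} \log p$. There exists $Y \subset [n]$ with $n/4 \le |Y| \le n/2$ such that $$|v_Y| \ge \frac{|v|}{4} \qquad \text{and} \qquad T_\ell(v_Y) \subset T_{8\ell}(v),$$ where $\ell := 2^{-16} |v|$.
   Context: $\log$ is the natural logarithm. For $w \in \mathbb{Z}_p^m$, $|w|$ is the number of nonzero coordinates of $w$, and for $t \ge 0$ $$T_t(w) := \Big\{ k \in \mathbb{Z}_p : \sum_{i=1}^m \Big\| \frac{k \cdot w_i}{p} \Big\|^2 \le t \Big\},$$ where $k \cdot w_i \in \mathbb{Z}$ is the product of the representatives of $k$ and $w_i$ in $\{0,\ldots,p-1\}$, and $\|x\|$ is the distance from $x$ to the nearest integer. For $Y \subset [n]$, $v_Y \in \mathbb{Z}_p^{|Y|}$ is the restriction of $v$ to the coordinates in $Y$ (so $T_\ell(v_Y)$ sums only over $i \in Y$). *)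

(* Defs.v *)
From HB Require Import structures.
From mathcomp Require Import all_boot all_order all_algebra.
From mathcomp Require Import all_classical all_reals all_analysis.
Set Implicit Arguments. Unset Strict Implicit. Unset Printing Implicit Defensive.
Import Order.TTheory GRing.Theory Num.Theory.
Local Open Scope ring_scope.

Definition distZ (R : realType) (x : R) : R :=
  Num.min (x - (Num.floor x)%:~R) ((Num.ceil x)%:~R - x).

(* |v_Y| : number of nonzero coordinates of v restricted to Y *)
Definition supp_size (p n : nat) (v : {ffun 'I_n -> 'Z_p}) (Y : {set 'I_n}) : nat :=
  #|[set i in Y | v i != 0]|.

(* T_t(v_Y) = { k in Z_p : sum_{i in Y} || k * v_i / p ||^2 <= t },
   with k * v_i the product of the representatives in {0,...,p-1} (as nat). *)
Definition Tset (R : realType) (p n : nat) (v : {ffun 'I_n -> 'Z_p})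
    (Y : {set 'I_n}) (t : R) : {set 'Z_p} :=
  [set k : 'Z_p | \sum_(i in Y) (distZ (((k : nat) * (v i : nat))%N%:R / p%:R)) ^+ 2 <= t].

(* Main.v *)
Require Import Defs.
From HB Require Import structures.
From mathcomp Require Import all_boot all_order all_algebra.
From mathcomp Require Import all_classical all_reals all_analysis.
From mathcomp Require Import lra ring zify.
Import Order.TTheory GRing.Theory Num.Theory.
Local Open Scope ring_scope.

Section Aux.
Variable R : realType.

Lemma distZ_bnd (x : R) : 0 <= distZ x <= 1/2.
Proof.
rewrite /distZ; set a := x - _; set b := _ - x.
have ha : 0 <= a by rewrite /a subr_ge0 floor_le.
have hb : 0 <= b by rewrite /b subr_ge0 ceil_ge.
have hab : a + b <= 1.
  rewrite /a /b ceil_floor addrC addrA subrK rmorphD /= addrC addKr.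
  by case: (x \isn't a Num.int).
apply/andP; split; first by rewrite le_min ha hb.
rewrite ge_min; apply/orP; have [h|h] := leP a b; [left|right]; lra.
Qed.

Lemma expN_le (y : R) : 0 <= y -> expR (- y) <= 1 - y + y ^+ 2.
Proof.
move=> y0.
have h1 : expR (- y) * (1 + y) <= 1.
  have := expR_ge1Dx y => h.
  have e0 : 0 < expR (- y) by apply: expR_gt0.
  have : expR (- y) * (1 + y) <= expR (- y) * expR y by rewrite ler_pM2l.
  by rewrite -expRD addNr expR0.
have e0 : 0 < expR (- y) by apply: expR_gt0.
nra.
Qed.

Lemma pair_sum (H : nat -> R) m :
  \sum_(i < (2 * m)%N) H i = \sum_(j < m) (H (2 * j)%N + H (2 * j).+1).
Proof.
elim: m => [|m IH]; first by rewrite !big_ord0.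
rewrite [RHS]big_ord_recr /= -IH.
have -> : (2 * m.+1 = (2 * m).+1.+1)%N by rewrite mulnS addnC addn2.
by rewrite big_ord_recr big_ord_recr /= addrA.
Qed.

Lemma one_bnd (t a : R) : 0 <= t <= 1 -> 0 <= a <= 1 ->
  expR (- (t * a)) <= 1 - (t - t ^+ 2) * a.
Proof.
move=> /andP[t0 t1] /andP[a0 a1].
have ta0 : 0 <= t * a by rewrite mulr_ge0.
have he := @expN_le (t * a) ta0.
have : a ^+ 2 <= a by rewrite expr2 ler_piMl.
move=> ha.
have : t ^+ 2 * a ^+ 2 <= t ^+ 2 * a by rewrite ler_wpM2l // sqr_ge0.
move: he; rewrite exprMn; lra.
Qed.

Lemma chern m (x : nat -> R) t : 0 <= t <= 1 -> (forall i, 0 <= x i <= 1) ->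
  \sum_(c : {ffun 'I_m -> bool}) expR (- (t * \sum_(j < m) x (2 * j + c j)%N))
  <= 2 ^+ m * expR (- ((t - t ^+ 2) / 2 * \sum_(i < (2 * m)%N) x i)).
Proof.
move=> ht hx.
have -> : \sum_(c : {ffun 'I_m -> bool}) expR (- (t * \sum_(j < m) x (2 * j + c j)%N))
  = \prod_(j < m) \sum_(b : bool) expR (- (t * x (2 * j + b)%N)).
  rewrite bigA_distr_bigA /=; apply: eq_bigr => c _.
  by rewrite mulr_sumr -sumrN expR_sum.
rewrite pair_sum mulr_sumr -sumrN expR_sum.
rewrite -[X in 2 ^+ X](card_ord m) -prodr_const -big_split /=.
apply: ler_prod => j _; apply/andP; split.
  by apply: sumr_ge0 => b _; apply/ltW/expR_gt0.
rewrite big_bool /= addn0 addn1.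
have h1 := @one_bnd t _ ht (hx (2 * j)%N).
have h2 := @one_bnd t _ ht (hx (2 * j).+1).
set y := (t - t ^+ 2) / 2 * (x (2 * j)%N + x (2 * j).+1).
have := expR_ge1Dx (- y).
rewrite /y; lra.
Qed.

Definition get (n : nat) (h : 'I_n -> R) (i : nat) : R :=
  if insub i is Some j then h j else 0.
Arguments get {n}.

Lemma get_val n (h : 'I_n -> R) (j : 'I_n) : get h j = h j.
Proof. by rewrite /get valK. Qed.

Lemma get_bnd n (h : 'I_n -> R) i : (forall j, 0 <= h j <= 1) -> 0 <= get h i <= 1.
Proof. by move=> H; rewrite /get; case: insub => [j|] //; rewrite lexx ler01. Qed.

Lemma sum_get n (h : 'I_n -> R) : \sum_(i < n) get h i = \sum_i h i.
Proof. by apply: eq_bigr => i _; rewrite get_val. Qed.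

Lemma tail (x : nat -> R) n : (forall i, 0 <= x i <= 1) ->
  \sum_(i < n) x i <= \sum_(i < (2 * (n %/ 2))%N) x i + 1.
Proof.
move=> hx; have [e|e] : n = (2 * (n %/ 2))%N \/ n = (2 * (n %/ 2)).+1.
- have := odd_double_half n; rewrite -mul2n -divn2.
  case: (odd n) => /= h; [right|left]; by rewrite -[LHS]h.
- by rewrite -e lerDl ler01.
- rewrite [in X in X <= _]e big_ord_recr /= lerD2l.
  by case/andP: (hx (2 * (n %/ 2))%N).
Qed.

Lemma numeric (p : R) : 2 <= p ->
  (p + 1) * expR (- (8 * ln p) + 3 / 32) < 1.
Proof.
move=> p2.
have p0 : 0 < p by apply: lt_le_trans p2; rewrite ltr0n.
have e3 : expR (3 / 32 : R) <= 2.
  have h := expR_ge1Dx (- (3 / 32) : R).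
  have hh : expR (3 / 32 : R) * expR (- (3 / 32)) = 1 by rewrite -expRD addrN expR0.
  have g0 : 0 < expR (3 / 32 : R) by apply: expR_gt0.
  nra.
have eq8 : expR (- (8 * ln p)) = p^-1 ^+ 8.
  by rewrite -mulrN expRM_natl expRN lnK // posrE.
set q := p^-1 in eq8.
have pq : p * q = 1 by rewrite mulfV // gt_eqF.
have q0 : 0 < q by rewrite invr_gt0.
have q2 : q <= 1 / 2 by rewrite /q -[p]invrK -invf_div lef_pV2 ?posrE //; lra.
have q73 : q ^+ 7 <= q ^+ 3 by apply: ler_wiXn2l; [exact: ltW| lra|].
have : q ^+ 3 <= (1/2) ^+ 3 by apply: lerXn2r; rewrite ?nnegrE; [exact: ltW|lra|].
rewrite expRD eq8 => h3.
have e : (p + 1) * q ^+ 8 = q ^+ 7 + q ^+ 8.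
  by rewrite mulrDl mul1r [q ^+ 8]exprS mulrA pq mul1r.
have q87 : q ^+ 8 <= q ^+ 7 by apply: ler_wiXn2l; [exact: ltW| lra|].
have g0 : 0 < expR (3 / 32 : R) by apply: expR_gt0.
have q80 : 0 <= q ^+ 8 by rewrite exprn_ge0 // ltW.
rewrite mulrA e.
have hq : q ^+ 7 + q ^+ 8 <= 1 / 4 by move: h3; rewrite expr_div_n expr1n; lra.
nra.
Qed.

End Aux.
Arguments get {R n}.
Arguments chern {R}.
Arguments tail {R}.
Arguments numeric {R}.

Lemma pos_lt n (j : nat) (b : bool) : (j < n %/ 2)%N -> (2 * j + b < n)%N.
Proof. case: b => /=; lia. Qed.

Lemma pos_inj (j1 j2 : nat) (b1 b2 : bool) : (2 * j1 + b1 = 2 * j2 + b2)%N -> j1 = j2.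
Proof. case: b1; case: b2 => /=; lia. Qed.

Lemma half_lo n : (2 <= n)%N -> (n <= n %/ 2 * 4)%N.
Proof. lia. Qed.

Lemma half_hi n : (n %/ 2 * 2 <= n)%N.
Proof. lia. Qed.

Lemma sum_setT (R : realType) (T : finType) (F : T -> R) :
  \sum_(i in ([set: T] : {set T})) F i = \sum_i F i.
Proof. by apply: eq_bigl => i; rewrite !inE. Qed.

Lemma supp_sum (R : realType) p n (v : {ffun 'I_n -> 'Z_p}) (Y : {set 'I_n}) :
  (supp_size v Y)%:R = \sum_(i in Y) ((v i != 0)%:R : R).
Proof.
rewrite /supp_size.
have -> : \sum_(i in Y) ((v i != 0)%:R : R) = \sum_(i in Y) (if v i != 0 then 1 else 0).
  by apply: eq_bigr => i _; case: (v i != 0).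
rewrite -big_mkcondr /=.
have -> : \sum_(i in Y | v i != 0) (1 : R) = \sum_(i in [set i in Y | v i != 0]) 1.
  by apply: eq_bigl => i; rewrite inE.
by rewrite sumr_const.
Qed.

Theorem lemma3p5 (R : realType) (p n : nat) (v : {ffun 'I_n -> 'Z_p}) :
  prime p ->
  2 ^+ 18 * ln (p%:R : R) <= (supp_size v [set: 'I_n])%:R ->
  let ell : R := (supp_size v [set: 'I_n])%:R / 2 ^+ 16 in
  exists Y : {set 'I_n},
    [/\ n%:R / 4 <= (#|Y|%:R : R), (#|Y|%:R : R) <= n%:R / 2,
        (supp_size v [set: 'I_n])%:R / 4 <= ((supp_size v Y)%:R : R)
      & Tset v Y ell \subset Tset v [set: 'I_n] (8 * ell)].
Proof.
move=> pr hs ell.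
set s := supp_size v [set: 'I_n] in hs ell *.
set L := ln (p%:R : R) in hs.
have p2 : (2:R) <= p%:R by rewrite ler_nat prime_gt1.
have p0 : (0:R) < p%:R by lra.
have L0 : 0 < L by apply: ln_gt0; lra.
have hL : 1 / 2 <= L.
  have h := expR_ge1Dx (- L).
  have : expR (- L) = (p%:R)^-1 by rewrite expRN lnK // posrE.
  move=> e; rewrite e in h.
  have : (p%:R : R)^-1 <= 1 / 2 by rewrite -[p%:R]invrK -invf_div lef_pV2 ?posrE //; lra.
  lra.
set K : R := 2 ^+ 16.
have K64 : 64 <= K by rewrite /K -natrX ler_nat.
have e18 : (2:R) ^+ 18 = K * 4.
  have -> : (2:R) ^+ 18 = 2 ^+ 16 * 2 ^+ 2 by rewrite -exprD.
  by rewrite expr2 -natrM.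
rewrite e18 in hs.
have K0 : 0 < K by lra.
have hell : ell * K = s%:R by rewrite /ell mulfVK // gt_eqF.
have hl : 4 * L <= ell.
  rewrite -(ler_pM2r K0) hell; nra.
have hsn : (s <= n)%N by rewrite /s /supp_size -[X in (_ <= X)%N]card_ord max_card.
have n2 : (2 <= n)%N.
  have : (2:R) <= s%:R by nra.
  rewrite ler_nat => h; exact: leq_trans h hsn.
set m := (n %/ 2)%N.
pose f (k : 'Z_p) (i : 'I_n) : R :=
  distZ (((k : nat) * (v i : nat))%N%:R / p%:R) ^+ 2.
have hf : forall k i, 0 <= f k i <= 1 / 4.
  move=> k i; rewrite /f; have /andP[d0 d1] := @distZ_bnd R (((k : nat) * (v i : nat))%N%:R / (p%:R : R)).
  rewrite exprn_ge0 //=; rewrite expr2; nra.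
pose x (k : 'Z_p) (i : nat) : R := 4 * get (f k) i.
have hx : forall k i, 0 <= x k i <= 1.
  move=> k i; rewrite /x /get; case: insub => [j|] /=; last by lra.
  have := hf k j; lra.
pose g (i : 'I_n) : R := (v i != 0)%:R.
pose G := get g.
have hG : forall i, 0 <= G i <= 1.
  move=> i; apply: get_bnd => j; rewrite /g; case: (v j != 0) => /=; lra.
pose bad (k : 'Z_p) := 8 * ell < \sum_i f k i.
pose E := expR (- (8 * L) + 3 / 32).
pose Phi (c : {ffun 'I_m -> bool}) :=
  \sum_(k | bad k) (expR ell * expR (- (1 / 4 * \sum_(j < m) x k (2 * j + c j)%N)))
  + expR (s%:R / 16) * expR (- (1 / 4 * \sum_(j < m) G (2 * j + c j)%N)).
have t14 : 0 <= (1 / 4 : R) <= 1.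
  by apply/andP; split; lra.
have tt : ((1 / 4 : R) - (1 / 4) ^+ 2) / 2 = 3 / 32 by rewrite expr2; field.
have hsum : \sum_(c : {ffun 'I_m -> bool}) Phi c < 2 ^+ m.
  rewrite /Phi big_split /= exchange_big /=.
  have m0 : (0 : R) < 2 ^+ m by rewrite exprn_gt0 //; lra.
  have E0 : 0 < E by apply: expR_gt0.
  have b1 : \sum_(k | bad k) \sum_(c : {ffun 'I_m -> bool}) (expR ell * expR (- (1 / 4 * \sum_(j < m) x k (2 * j + c j)%N)))
      <= 2 ^+ m * E * p%:R.
    rewrite big_mkcond /=.
    apply: (@le_trans _ _ (\sum_(k : 'Z_p) 2 ^+ m * E)).
      apply: ler_sum => k _; case: ifP => hb; last by rewrite mulr_ge0 // ltW.
      rewrite -mulr_sumr.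
      have := chern m (x k) (1/4) t14 (hx k); rewrite tt => hc.
      apply: (le_trans (ler_wpM2l (expR_ge0 _) hc)).
      rewrite mulrCA -expRD ler_pM2l // ler_expR.
      have := tail (x k) n (hx k); rewrite /x -mulr_sumr sum_get.
      move: hb; rewrite /bad => hb ht.
      nra.
    rewrite sumr_const card_ord Zp_cast ?prime_gt1 //.
    by rewrite [in X in _ <= X]mulr_natr.
  have b2 : \sum_(c : {ffun 'I_m -> bool}) (expR (s%:R / 16) * expR (- (1 / 4 * \sum_(j < m) G (2 * j + c j)%N)))
      <= 2 ^+ m * E.
    rewrite -mulr_sumr.
    have := chern m G (1/4) t14 hG; rewrite tt => hc.
    apply: (le_trans (ler_wpM2l (expR_ge0 _) hc)).
    rewrite mulrCA -expRD ler_pM2l // ler_expR.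
    have := tail G n hG; rewrite /G sum_get.
    have -> : \sum_i g i = s%:R by rewrite /g /s supp_sum sum_setT.
    move=> ht; nra.
  have := numeric (p%:R) p2; rewrite -/L -/E => hn.
  have : 2 ^+ m * E * p%:R + 2 ^+ m * E < 2 ^+ m.
    have -> : 2 ^+ m * E * p%:R + 2 ^+ m * E = 2 ^+ m * ((p%:R + 1) * E) by ring.
    by rewrite -[X in _ < X]mulr1 ltr_pM2l.
  lra.
have [c hc] : exists c, Phi c < 1.
  case: (boolP [exists c, Phi c < 1]) => [/existsP //| /existsPn H].
  have : \sum_(c : {ffun 'I_m -> bool}) (1 : R) <= \sum_c Phi c.
    by apply: ler_sum => c _; rewrite leNgt; apply: H.
  rewrite sumr_const card_ffun card_bool card_ord natrX => h.
  lra.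
have hpos : forall j : 'I_m, (2 * j + c j < n)%N.
  by move=> j; apply: pos_lt; exact: ltn_ord j.
pose pos (j : 'I_m) : 'I_n := Ordinal (hpos j).
have pinj : injective pos.
  move=> j1 j2 /(congr1 val) /= e; apply/val_inj => /=.
  exact: pos_inj e.
pose Y := [set pos j | j : 'I_m].
have sumY : forall h : 'I_n -> R, \sum_(i in Y) h i = \sum_(j < m) get h (2 * j + c j)%N.
  move=> h; rewrite big_imset /=; last by move=> a b _ _; apply: pinj.
  apply: eq_big => // j _; by rewrite -(get_val R n h (pos j)).
have cardY : #|Y| = m by rewrite card_imset // card_ord.
have A0 : forall c' : {ffun 'I_m -> bool}, 0 <= \sum_(k | bad k)
     (expR ell * expR (- (1 / 4 * \sum_(j < m) x k (2 * j + c' j)%N))).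
  by move=> c'; apply: sumr_ge0 => k _; rewrite mulr_ge0 // expR_ge0.
have B0 : 0 <= expR (s%:R / 16) * expR (- (1 / 4 * \sum_(j < m) G (2 * j + c j)%N)).
  by rewrite mulr_ge0 // expR_ge0.
exists Y; split.
- by rewrite cardY ler_pdivrMr ?ltr0n // -natrM ler_nat half_lo.
- by rewrite cardY ler_pdivlMr ?ltr0n // -natrM ler_nat half_hi.
- rewrite supp_sum (sumY g).
  have : expR (s%:R / 16) * expR (- (1 / 4 * \sum_(j < m) G (2 * j + c j)%N)) < 1.
    move: hc; rewrite /Phi; have := A0 c; lra.
  rewrite -expRD expR_lt1 /G; lra.
- apply/fintype.subsetP => k; rewrite !inE => hk.
  have hk' : \sum_(i in Y) f k i <= ell := hk.
  rewrite sum_setT leNgt; apply/negP => hb.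
  have : expR ell * expR (- (1 / 4 * \sum_(j < m) x k (2 * j + c j)%N)) < 1.
    move: hc; rewrite /Phi (bigD1 k) //=.
    have : 0 <= \sum_(i | bad i && (i != k))
       (expR ell * expR (- (1 / 4 * \sum_(j < m) x i (2 * j + c j)%N))).
      by apply: sumr_ge0 => i _; rewrite mulr_ge0 // expR_ge0.
    lra.
  rewrite -expRD expR_lt1 /x -mulr_sumr -sumY; lra.
Qed.
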